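(* Let $r\ge2$ and $p\ge2$ be integers, $\mathcal{A}$ the adjacency tensor of an $r$-uniform (possibly weighted) hypergraph on $n$ vertices, and $f(\mathbf{x})=(r-1)!\,\mathcal{A}\mathbf{x}^r/\|\mathbf{x}\|_p^r$. Suppose the sequence $\{\mathbf{x}_k\}$ is generated by the CSRH iteration (described in the context) from an arbitrary unit vector $\mathbf{x}_0\in\mathbb{S}^{n-1}$, that it is infinite, and that $\nabla f(\mathbf{x}_k)\neq0$ for all $k$. Then $$\lim_{k\to\infty}\|\nabla f(\mathbf{x}_k)\|=0.$$
   Context: $\mathbb{S}^{n-1}=\{\mathbf{x}\in\mathbb{R}^n:\mathbf{x}^\top\mathbf{x}=1\}$. Adjacency tensor: for a weighted $r$-uniform hypergraph with vertex set $\{1,\dots,n\}$ and edge weights $s(e)>0$, $\mathcal{A}=(a_{i_1\cdots i_r})$ is symmetric with $a_{i_1\cdots i_r}=s(e)/(r-1)!$ if $\{i_1,\dots,i_r\}=e$ is an edge and $0$ otherwise; $\mathcal{A}\mathbf{x}^r=\sum a_{i_1\cdots i_r}x_{i_1}\cdots x_{i_r}$, $(\mathcal{A}\mathbf{x}^{r-1})_i=\sum a_{ii_2\cdots i_r}x_{i_2}\cdots x_{i_r}$, $\|\mathbf{x}\|_p=(\sum|x_i|^p)^{1/p}$, $\|\cdot\|$ Euclidean. $\nabla f(\mathbf{x})=\frac{r!}{\|\mathbf{x}\|_p^r}(\mathcal{A}\mathbf{x}^{r-1}-\mathcal{A}\mathbf{x}^r\|\mathbf{x}\|_p^{-p}\mathbf{x}^{\langle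 p-1\rangle})$ with $(\mathbf{x}^{\langle p-1\rangle})_i=|x_i|^{p-1}\mathrm{sgn}(x_i)$. CSRH iteration: fix $0<c_1<c_2<1$, $\tfrac14<\tau<1$, $\epsilon>0$, a unit vector $\mathbf{x}_0$, and $\mathbf{p}_0=\nabla f(\mathbf{x}_0)$. At step $k$, with $\mathbf{x}_{k+1}(\alpha)=\frac{[(2-\alpha\mathbf{x}_k^\top\mathbf{p}_k)^2-\|\alpha\mathbf{p}_k\|^2]\mathbf{x}_k+4\alpha\mathbf{p}_k}{4+\|\alpha\mathbf{p}_k\|^2-(\alpha\mathbf{x}_k^\top\mathbf{p}_k)^2}$, choose $\alpha_k>0$ with $f(\mathbf{x}_{k+1}(\alpha_k))\ge f(\mathbf{x}_k)+c_1\alpha_k\nabla f(\mathbf{x}_k)^\top\mathbf{p}_k$ and $\nabla f(\mathbf{x}_{k+1}(\alpha_k))^\top\mathbf{p}_k\le c_2\nabla f(\mathbf{x}_k)^\top\mathbf{p}_k$; set $\mathbf{x}_{k+1}=\mathbf{x}_{k+1}(\alpha_k)$, $\mathbf{d}_k=\mathbf{x}_{k+1}-\mathbf{x}_k$, $\mathbf{y}_k=\nabla f(\mathbf{x}_{k+1})-\nabla f(\mathbf{x}_k)$, $\beta_k=\max(0,\tilde\beta_k)$ where $\tilde\beta_k=(\tau\mathbf{d}_k\|\mathbf{y}_k\|^2/(\mathbf{d}_k^\top\mathbf{y}_k)-\mathbf{y}_k)^\top\nabla f(\mathbf{x}_{k+1})/(\mathbf{d}_k^\top\mathbf{y}_k)$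 if $|\mathbf{d}_k^\top\mathbf{y}_k|\ge\epsilon\|\mathbf{d}_k\|\|\mathbf{y}_k\|$ and $\tilde\beta_k=0$ otherwise, and $\mathbf{p}_{k+1}=\nabla f(\mathbf{x}_{k+1})+\beta_k\mathbf{d}_k$. *)

(* Defs.v *)
From HB Require Import structures.
From mathcomp Require Import all_boot all_order all_algebra.
From mathcomp Require Import all_classical all_reals all_analysis.
Set Implicit Arguments. Unset Strict Implicit. Unset Printing Implicit Defensive.
Import Order.TTheory GRing.Theory Num.Theory.
Local Open Scope ring_scope.

Section CSRH.
Variables (R : realType) (n r p : nat).

Definition vec := 'I_n -> R.

Definition dotv (u v : vec) : R := \sum_(i < n) u i * v i.
Definition enorm (v : vec) : R := Num.sqrt (dotv v v).
Definition pnorm (v : vec) : R := (\sum_(i < n) `|v i| ^+ p) `^ (p%:R^-1).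

(* weighted r-uniform hypergraph: edge set E (subsets of vertices of size r),
   weights s (positive on edges); adjacency tensor entries indexed by
   r-tuples t = (i_1, ..., i_r) *)
Variables (E : {set {set 'I_n}}) (s : {set 'I_n} -> R).

Definition adj (t : {ffun 'I_r -> 'I_n}) : R :=
  if [set t j | j : 'I_r] \in E then s [set t j | j : 'I_r] / (r.-1)`!%:R else 0.

Definition Axr (x : vec) : R :=
  \sum_(t : {ffun 'I_r -> 'I_n}) adj t * \prod_(j : 'I_r) x (t j).

Definition Axr1 (x : vec) (i : 'I_n) : R :=
  \sum_(t : {ffun 'I_r -> 'I_n} | [forall j : 'I_r, (val j == 0%N) ==> (t j == i)])
     adj t * \prod_(j : 'I_r | val j != 0%N) x (t j).

Definition fobj (x : vec) : R := (r.-1)`!%:R * Axr x / pnorm x ^+ r.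

Definition xpow (x : vec) : vec := fun i => `|x i| ^+ p.-1 * Num.sg (x i).

Definition grad (x : vec) : vec := fun i =>
  r`!%:R / pnorm x ^+ r * (Axr1 x i - Axr x * (pnorm x ^+ p)^-1 * xpow x i).

Definition xnext (x d : vec) (alpha : R) : vec := fun i =>
  (((2 - alpha * dotv x d) ^+ 2 - enorm (fun j => alpha * d j) ^+ 2) * x i
     + 4 * alpha * d i)
  / (4 + enorm (fun j => alpha * d j) ^+ 2 - (alpha * dotv x d) ^+ 2).

Definition beta_tilde (tau eps : R) (d y g : vec) : R :=
  if eps * enorm d * enorm y <= `|dotv d y|
  then dotv (fun i => tau * d i * enorm y ^+ 2 / dotv d y - y i) g / dotv d y
  else 0.

Definition beta (tau eps : R) (d y g : vec) : R :=
  Num.max 0 (beta_tilde tau eps d y g).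

End CSRH.

(* Main.v *)
Require Import Defs.
From HB Require Import structures.
From mathcomp Require Import all_boot all_order all_algebra.
From mathcomp Require Import all_classical all_reals all_analysis.
From mathcomp Require Import ring lra.
Import Order.TTheory GRing.Theory Num.Theory.
Import numFieldNormedType.Exports.
Local Open Scope ring_scope.
Set Implicit Arguments. Unset Strict Implicit.

Section Basic.
Variables (R : realType) (n : nat).
Implicit Types (u v w f : vec R n).

Lemma dotvC u v : dotv u v = dotv v u.
Proof. by rewrite /dotv; apply: eq_bigr => i _; rewrite mulrC. Qed.

Lemma dotv_lin f u v w a b : (forall i, f i = a * u i + b * v i) ->
  dotv f w = a * dotv u w + b * dotv v w.
Proof.
move=> Hf; rewrite /dotv 2!mulr_sumr -big_split /=; apply: eq_bigr => i _.
by rewrite Hf; ring.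
Qed.

Lemma dotv_ext u u' v : (forall i, u i = u' i) -> dotv u v = dotv u' v.
Proof. by move=> H; rewrite /dotv; apply: eq_bigr => i _; rewrite H. Qed.

Lemma dotv_ge0 u : 0 <= dotv u u.
Proof. by rewrite /dotv; apply: sumr_ge0 => i _; rewrite -expr2 sqr_ge0. Qed.

Lemma dotv_eq0 u : dotv u u = 0 -> forall i, u i = 0.
Proof.
move=> H i; have : u i * u i <= 0.
  rewrite -H /dotv (bigD1 i) //= lerDl; apply: sumr_ge0 => j _.
  by rewrite -expr2 sqr_ge0.
by rewrite -expr2 => Hi; apply/eqP; rewrite -sqrf_eq0 eq_le Hi sqr_ge0.
Qed.

Lemma coord_le u i : u i ^+ 2 <= dotv u u.
Proof.
rewrite /dotv (bigD1 i) //= expr2 lerDl; apply: sumr_ge0 => j _.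
by rewrite -expr2 sqr_ge0.
Qed.

Lemma quad_nonneg (A w C z : R) : 0 <= A -> 0 <= C -> w ^+ 2 <= A * C ->
  0 <= A * z ^+ 2 - 2 * w * z + C.
Proof.
move=> HA HC Hw; have [A0'|A0] := eqVneq A 0.
  rewrite A0' mul0r in Hw; rewrite A0'.
  have -> : w = 0 by apply/eqP; rewrite -sqrf_eq0 eq_le sqr_ge0 andbT.
  by rewrite mul0r mulr0 mul0r subr0 add0r.
have Ap : 0 < A by rewrite lt_def A0.
have : 0 <= A * (A * z ^+ 2 - 2 * w * z + C).
  have -> : A * (A * z ^+ 2 - 2 * w * z + C) = (A * z - w) ^+ 2 + (A * C - w ^+ 2) by ring.
  by apply: addr_ge0; [exact: sqr_ge0| rewrite subr_ge0].
by rewrite pmulr_rge0.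
Qed.

Lemma dot2 u v f g a b c e : (forall i, f i = a * u i + b * v i) ->
  (forall i, g i = c * u i + e * v i) ->
  dotv f g = a * c * dotv u u + (a * e + b * c) * dotv u v + b * e * dotv v v.
Proof.
move=> Hf Hg; rewrite /dotv !mulr_sumr -!big_split /=; apply: eq_bigr => i _.
by rewrite Hf Hg; ring.
Qed.

Lemma CS u v : dotv u v ^+ 2 <= dotv u u * dotv v v.
Proof.
set a := dotv u u; set b := dotv u v; set c := dotv v v.
have Ha : 0 <= a := dotv_ge0 u. have Hc : 0 <= c := dotv_ge0 v.
have [a0|a0] := eqVneq a 0.
  have H0 := @dotv_eq0 u a0.
  have -> : b = 0 by rewrite /b /dotv big1 // => i _; rewrite H0 mul0r.
  by rewrite expr2 mul0r mulr_ge0.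
have ap : 0 < a by rewrite lt_def a0.
have H : 0 <= dotv (fun i => a * v i - b * u i) (fun i => a * v i - b * u i).
  exact: dotv_ge0.
rewrite (@dot2 u v _ _ (-b) a (-b) a) in H; try by move=> i /=; ring.
rewrite -/a -/b -/c in H.
have E : - b * - b * a + (- b * a + a * - b) * b + a * a * c = a * (a * c - b ^+ 2) by ring.
rewrite E pmulr_rge0 // subr_ge0 in H.
exact: H.
Qed.

End Basic.

Section Xnext.
Variables (R : realType) (n : nat).
Implicit Types (u v w f x d : vec R n).

Lemma enorm_sq u : enorm u ^+ 2 = dotv u u.
Proof. by rewrite /enorm sqr_sqrtr // dotv_ge0. Qed.

Lemma enorm_scale (al : R) d : enorm (fun j => al * d j) ^+ 2 = al ^+ 2 * dotv d d.
Proof.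
rewrite enorm_sq (@dot2 _ _ d d _ _ al 0 al 0) ?expr2; try by move=> i /=; ring.
ring.
Qed.

Lemma xnext_coef x d (al : R) : forall i, xnext x d al i =
  (((2 - al * dotv x d) ^+ 2 - al ^+ 2 * dotv d d) /
     (4 + al ^+ 2 * dotv d d - (al * dotv x d) ^+ 2)) * x i
  + (4 * al / (4 + al ^+ 2 * dotv d d - (al * dotv x d) ^+ 2)) * d i.
Proof. by move=> i; rewrite /xnext enorm_scale; ring. Qed.

Lemma Q_ge4 x d (al : R) : dotv x x = 1 ->
  4 <= 4 + al ^+ 2 * dotv d d - (al * dotv x d) ^+ 2.
Proof.
move=> Hx; have := CS x d; rewrite Hx mul1r => H.
rewrite -addrA lerDl exprMn -mulrBr mulr_ge0 ?sqr_ge0 //.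
by rewrite subr_ge0.
Qed.

Lemma alg_unit (al a P : R) :
  (4 + al ^+ 2 * P - (al * a) ^+ 2) != 0 ->
  let Q := (4 + al ^+ 2 * P - (al * a) ^+ 2) in
  let A := ((2 - al * a) ^+ 2 - al ^+ 2 * P) in
  A / Q * (A / Q) * 1 + (A/Q * (4 * al / Q) + 4 * al / Q * (A/Q)) * a + 4 * al / Q * (4 * al / Q) * P = 1.
Proof. move=> H Q A. rewrite /Q /A. field. done. Qed.

Lemma alg_step (al a P : R) :
  (4 + al ^+ 2 * P - (al * a) ^+ 2) != 0 ->
  let Q := (4 + al ^+ 2 * P - (al * a) ^+ 2) in
  let A := ((2 - al * a) ^+ 2 - al ^+ 2 * P) in
  let c := al ^+ 2 * P - (al * a) ^+ 2 in
  (A / Q - 1) * (A / Q - 1) * 1 + ((A / Q - 1) * (4 * al / Q) + 4 * al / Q * (A / Q - 1)) * a +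
  4 * al / Q * (4 * al / Q) * P = 4 * c / (4 + c).
Proof.
move=> H Q A c.
have -> : 4 + c = Q by rewrite /c /Q; ring.
rewrite /Q /A /c. field. done. Qed.

Lemma xnext_unit x d (al : R) : dotv x x = 1 ->
  dotv (xnext x d al) (xnext x d al) = 1.
Proof.
move=> Hx; have HQ := Q_ge4 d al Hx.
rewrite (dot2 (xnext_coef x d al) (xnext_coef x d al)) Hx.
apply: alg_unit.
by rewrite gt_eqF // (lt_le_trans _ HQ).
Qed.

Lemma xnext_step x d (al : R) : dotv x x = 1 ->
  dotv (fun i => xnext x d al i - x i) (fun i => xnext x d al i - x i)
  <= al ^+ 2 * dotv d d.
Proof.
move=> Hx; have HQ := Q_ge4 d al Hx.
have Q0 : 4 + al ^+ 2 * dotv d d - (al * dotv x d) ^+ 2 != 0.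
  by rewrite gt_eqF // (lt_le_trans _ HQ).
have H : forall i, xnext x d al i - x i =
  (((2 - al * dotv x d) ^+ 2 - al ^+ 2 * dotv d d) /
     (4 + al ^+ 2 * dotv d d - (al * dotv x d) ^+ 2) - 1) * x i
  + (4 * al / (4 + al ^+ 2 * dotv d d - (al * dotv x d) ^+ 2)) * d i.
  by move=> i; rewrite xnext_coef; ring.
rewrite (dot2 H H) Hx (alg_step Q0).
set c := al ^+ 2 * _ - _.
have c0 : 0 <= c by rewrite /c; lra.
have -> : al ^+ 2 * dotv d d = c + (al * dotv x d) ^+ 2 by rewrite /c; ring.
apply: (@le_trans _ _ c); last by rewrite lerDl sqr_ge0.
rewrite ler_pdivrMr; last by rewrite ltr_wpDr.
nra.
Qed.

End Xnext.

Section Lip.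
Variables (R : realType) (n : nat).
Implicit Types (u v w f x y d : vec R n) (h g : vec R n -> R).

Definition onU x := dotv x x = 1.
Definition dst x y := Num.sqrt (dotv (fun i => x i - y i) (fun i => x i - y i)).
Definition LB h := exists M L : R,
  (forall x, onU x -> `|h x| <= M) /\
  (forall x y, onU x -> onU y -> `|h x - h y| <= L * dst x y).

Lemma dst_ge0 x y : 0 <= dst x y. Proof. exact: sqrtr_ge0. Qed.

Lemma LB_ext h g : (forall x, onU x -> h x = g x) -> LB h -> LB g.
Proof.
move=> E [M [L [H1 H2]]]; exists M, L; split.
  by move=> x Hx; rewrite -E //; apply: H1.
by move=> x y Hx Hy; rewrite -!E //; apply: H2.
Qed.

Lemma LB_cst (c : R) : LB (fun _ => c).
Proof.
exists `|c|, 0; split => // x y _ _; by rewrite subrr normr0 mul0r.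
Qed.

Lemma LB_coord i : LB (fun x => x i).
Proof.
exists 1, 1; split.
  move=> x Hx; rewrite -(sqrtr_sqr (x i)) -sqrtr1 ler_wsqrtr //.
  by rewrite -Hx; exact: coord_le.
move=> x y _ _; rewrite mul1r -(sqrtr_sqr (x i - y i)) ler_wsqrtr //.
exact: (coord_le (fun i => x i - y i) i).
Qed.

Lemma LB_add h g : LB h -> LB g -> LB (fun x => h x + g x).
Proof.
move=> [M1 [L1 [H1 K1]]] [M2 [L2 [H2 K2]]]; exists (M1 + M2), (L1 + L2); split.
  by move=> x Hx; rewrite (le_trans (ler_normD _ _)) // lerD ?H1 ?H2.
move=> x y Hx Hy.
have -> : h x + g x - (h y + g y) = (h x - h y) + (g x - g y) by ring.
by rewrite mulrDl (le_trans (ler_normD _ _)) // lerD ?K1 ?K2.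
Qed.

Lemma LB_opp h : LB h -> LB (fun x => - h x).
Proof.
move=> [M1 [L1 [H1 K1]]]; exists M1, L1; split.
  by move=> x Hx; rewrite normrN H1.
by move=> x y Hx Hy; rewrite -opprD normrN K1.
Qed.

Lemma LB_mul h g : LB h -> LB g -> LB (fun x => h x * g x).
Proof.
move=> [M1 [L1 [H1 K1]]] [M2 [L2 [H2 K2]]]; exists (M1 * M2), (M1 * L2 + M2 * L1); split.
  by move=> x Hx; rewrite normrM ler_pM ?H1 ?H2.
move=> x y Hx Hy.
have -> : h x * g x - h y * g y = h x * (g x - g y) + g y * (h x - h y) by ring.
rewrite (le_trans (ler_normD _ _)) // !normrM mulrDl -!mulrA.
by rewrite lerD // ler_pM ?H1 ?K1 ?K2 ?H2.
Qed.

Lemma LB_norm h : LB h -> LB (fun x => `|h x|).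
Proof.
move=> [M1 [L1 [H1 K1]]]; exists M1, L1; split.
  by move=> x Hx; rewrite normr_id H1.
by move=> x y Hx Hy; rewrite (le_trans (ler_dist_dist _ _)) ?K1.
Qed.

Lemma LB_inv h (m : R) : 0 < m -> (forall x, onU x -> m <= `|h x|) -> LB h ->
  LB (fun x => (h x)^-1).
Proof.
move=> m0 Hm [M1 [L1 [H1 K1]]]; exists m^-1, (L1 / m ^+ 2); split.
  move=> x Hx; rewrite normfV lef_pV2 ?Hm // posrE (lt_le_trans m0) ?Hm //.
move=> x y Hx Hy.
have hx0 : h x != 0 by rewrite -normr_gt0 (lt_le_trans m0) ?Hm.
have hy0 : h y != 0 by rewrite -normr_gt0 (lt_le_trans m0) ?Hm.
have -> : (h x)^-1 - (h y)^-1 = (h y - h x) / (h x * h y) by field; apply/andP.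
rewrite normrM normfV normrM distrC.
have -> : L1 / m ^+ 2 * dst x y = (L1 * dst x y) * (m ^+ 2)^-1 by rewrite mulrAC.
have Hxm := Hm x Hx; have Hym := Hm y Hy.
apply: ler_pM; [exact: normr_ge0 | by rewrite invr_ge0 mulr_ge0 | exact: K1 | ].

rewrite lef_pV2 ?posrE ?exprn_gt0 ?mulr_gt0 ?normr_gt0 //.
by rewrite expr2 ler_pM // ltW.
Qed.

Lemma LB_sum (I : Type) (s : seq I) (P : pred I) (F : I -> vec R n -> R) :
  (forall t, LB (F t)) -> LB (fun x => \sum_(t <- s | P t) F t x).
Proof.
move=> HF; elim: s => [|t s IH].
  by apply: (@LB_ext (fun _ => 0)) => [x _|]; [rewrite big_nil|apply: LB_cst].
case Pt: (P t).
  apply: (@LB_ext (fun x => F t x + \sum_(j <- s | P j) F j x)).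
    by move=> x _; rewrite big_cons Pt.
  exact: LB_add.
by apply: (LB_ext _ IH) => x _; rewrite big_cons Pt.
Qed.

Lemma LB_prod (I : Type) (s : seq I) (P : pred I) (F : I -> vec R n -> R) :
  (forall t, LB (F t)) -> LB (fun x => \prod_(t <- s | P t) F t x).
Proof.
move=> HF; elim: s => [|t s IH].
  by apply: (@LB_ext (fun _ => 1)) => [x _|]; [rewrite big_nil|apply: LB_cst].
case Pt: (P t).
  apply: (@LB_ext (fun x => F t x * \prod_(j <- s | P j) F j x)).
    by move=> x _; rewrite big_cons Pt.
  exact: LB_mul.
by apply: (LB_ext _ IH) => x _; rewrite big_cons Pt.
Qed.

Lemma LB_exp h k : LB h -> LB (fun x => h x ^+ k).
Proof.
move=> H; elim: k => [|k IH].
  by apply: (@LB_ext (fun _ => 1)) => [x _|]; [rewrite expr0|apply: LB_cst].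
apply: (@LB_ext (fun x => h x * h x ^+ k)); first by move=> x _; rewrite exprS.
exact: LB_mul.
Qed.

End Lip.

Lemma powdiff (R : realType) (k : nat) (a b m : R) : 0 < m -> m <= a -> m <= b ->
  m ^+ k * `|a - b| <= `|a ^+ k.+1 - b ^+ k.+1|.
Proof.
move=> m0 ma mb.
have a0 : 0 <= a by rewrite (le_trans (ltW m0)).
have b0 : 0 <= b by rewrite (le_trans (ltW m0)).
rewrite subrXX normrM mulrC ler_wpM2l //.
have H : 0 <= \sum_(i < k) a ^+ (k.+1.-1 - (lift ord0 i)) * b ^+ (lift ord0 i).
  by apply: sumr_ge0 => i _; rewrite mulr_ge0 // exprn_ge0.
rewrite big_ord_recl /= subn0 expr0 mulr1 ger0_norm; last first.
  by rewrite addr_ge0 // exprn_ge0.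
apply: (@le_trans _ _ (a ^+ k)); first by rewrite lerXn2r // ?nnegrE ltW.
by rewrite lerDl.
Qed.

Section Spec.
Variables (R : realType) (n r p : nat) (E : {set {set 'I_n}}) (s : {set 'I_n} -> R).
Hypothesis hp : (1 < p)%N.

Lemma LB_abs i : LB (fun x : vec R n => `|x i|).
Proof. by apply: LB_norm; apply: LB_coord. Qed.

Definition Sf (x : vec R n) := \sum_(i < n) `|x i| ^+ p.

Lemma LB_S : LB Sf.
Proof. by apply: LB_sum => i; apply: LB_exp; apply: LB_abs. Qed.

Lemma S_ge0 x : 0 <= Sf x.
Proof. by apply: sumr_ge0 => i _; rewrite exprn_ge0. Qed.

Lemma S_lb : exists m : R, [/\ 0 < m, m <= 1 & forall x, onU x -> m <= Sf x].
Proof.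
have [n0|n0] := eqVneq n 0%N.
  exists 1; split => // x; rewrite /onU.
  have -> : dotv x x = 0 by rewrite /dotv big1 // => i _; have := ltn_ord i; rewrite {2}n0.
  by move/eqP; rewrite eq_sym oner_eq0.
have np : (0 < n)%N by rewrite lt0n.
have nR : 0 < (n%:R : R) by rewrite ltr0n.
exists (n%:R^-1 ^+ p); split.
- by rewrite exprn_gt0 // invr_gt0.
- by apply: exprn_ile1; [rewrite invr_ge0 ltW | rewrite invf_le1 // ler1n].
move=> x Hx.
have [[i Hi]|Hno] := pselect (exists i, 1 <= n%:R * x i ^+ 2).
  have xi1 : `|x i| <= 1.
    by rewrite -(sqrtr_sqr (x i)) -sqrtr1 ler_wsqrtr // -Hx; exact: coord_le.
  have : n%:R^-1 <= `|x i|.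
    rewrite -[n%:R^-1]mul1r ler_pdivrMr //; apply: (le_trans Hi); rewrite [_ * n%:R]mulrC; apply: ler_wpM2l; first exact: ltW.
    by rewrite -real_normK ?num_real //; apply: ler_iXnr.
  move=> Hxi; apply: (le_trans (y := `|x i| ^+ p)).
    by rewrite lerXn2r // nnegrE ?invr_ge0 ltW.
  rewrite /Sf (bigD1 i) //= lerDl; apply: sumr_ge0 => j _; exact: exprn_ge0.
exfalso.
have H j : n%:R * x j ^+ 2 < 1.
  by rewrite ltNge; apply/negP => Hj; apply: Hno; exists j.
have : \sum_(j < n) n%:R * x j ^+ 2 < \sum_(j < n) (1 : R).
  apply: ltr_sum => //; apply/hasP; exists (Ordinal np) => //; exact: mem_index_enum.
rewrite -mulr_sumr sumr_const card_ord.
have -> : \sum_(i < n) x i ^+ 2 = 1 by rewrite -Hx /dotv; apply: eq_bigr => j _; rewrite expr2.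
by rewrite mulr1 ltxx.
Qed.

Lemma pn_pow (x : vec R n) : pnorm p x ^+ p = Sf x.
Proof.
have p0 : (p%:R : R) != 0 by rewrite pnatr_eq0 -lt0n (ltn_trans _ hp).
rewrite /pnorm -/(Sf x) -powR_mulrn ?powR_ge0 // -powRrM mulVf //.
by rewrite powRr1 // S_ge0.
Qed.

Lemma pn_lb (m : R) (x : vec R n) : 0 < m -> m <= 1 -> m <= Sf x ->
  m <= pnorm p x /\ 0 < pnorm p x.
Proof.
move=> m0 m1 mS.
have qp : 0 < pnorm p x by rewrite /pnorm powR_gt0 // (lt_le_trans m0).
split => //.
have [q1|q1] := leP (pnorm p x) 1.
  apply: (le_trans mS); rewrite -pn_pow; apply: ler_iXnr; [by rewrite (ltn_trans _ hp) | exact: ltW | exact: q1].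
by rewrite (le_trans m1) // ltW.
Qed.

Lemma LB_pn : LB (pnorm (R:=R) (n:=n) p).
Proof.
have [m [m0 m1 Hm]] := S_lb.
have [MS [LS [HS KS]]] := LB_S.
have pp : (0 < p)%N by rewrite (ltn_trans _ hp).
exists (1 + MS), (LS / m ^+ p.-1); split.
  move=> x Hx; have [_ qp] := pn_lb m0 m1 (Hm x Hx).
  rewrite ger0_norm; last exact: ltW.
  apply: (@le_trans _ _ (1 + Sf x)); last by rewrite lerD2l (le_trans (ler_norm _)) ?HS.
  have [q1|q1] := leP (pnorm p x) 1; first by rewrite (le_trans q1) // lerDl S_ge0.
  have := ler_eXnr pp (ltW q1); rewrite pn_pow => Hq; by rewrite (le_trans Hq) // lerDr.
move=> x y Hx Hy.
have [mx qx] := pn_lb m0 m1 (Hm x Hx).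
have [my qy] := pn_lb m0 m1 (Hm y Hy).
have := powdiff (p.-1) m0 mx my; rewrite prednK // !pn_pow => H.
have := le_trans H (KS x y Hx Hy).
rewrite mulrC -ler_pdivlMr ?exprn_gt0 //.
by rewrite mulrAC.
Qed.

Lemma LB_Axr : LB (Axr r E s).
Proof.
apply: (@LB_ext _ _ (fun x : vec R n => \sum_(t : {ffun 'I_r -> 'I_n}) adj E s t * \prod_(j : 'I_r) x (t j))) => //.
apply: LB_sum => t; apply: LB_mul; first exact: LB_cst.
by apply: LB_prod => j; apply: LB_coord.
Qed.

Lemma LB_Axr1 (i : 'I_n) : LB (fun x => Axr1 r E s x i).
Proof.
apply: (@LB_ext _ _ (fun x : vec R n => \sum_(t : {ffun 'I_r -> 'I_n} | [forall j : 'I_r, (val j == 0%N) ==> (t j == i)])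
     adj E s t * \prod_(j : 'I_r | val j != 0%N) x (t j))) => //.
apply: LB_sum => t; apply: LB_mul; first exact: LB_cst.
by apply: LB_prod => j; apply: LB_coord.
Qed.

Lemma LB_xpow (i : 'I_n) : LB (fun x : vec R n => xpow p x i).
Proof.
apply: (@LB_ext _ _ (fun x : vec R n => x i * `|x i| ^+ p.-2)).
  move=> x _; rewrite /xpow.
  have [k Hk] : exists k, p = k.+2 by case: p hp => [|[|k]] // _; exists k.
  rewrite Hk /=; symmetry.
  transitivity ((Num.sg (x i) * `|x i|) * `|x i| ^+ k); first by rewrite exprS; ring.
  by rewrite mulr_sg_norm.
by apply: LB_mul; [apply: LB_coord | apply: LB_exp; apply: LB_abs].
Qed.

Lemma pn_lbU : exists m : R, 0 < m /\ forall x : vec R n, onU x -> m <= pnorm p x.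
Proof.
have [m [m0 m1 Hm]] := S_lb; exists m; split => // x Hx.
by have [] := pn_lb m0 m1 (Hm x Hx).
Qed.

Lemma LB_invpn k : LB (fun x : vec R n => (pnorm p x ^+ k)^-1).
Proof.
have [m [m0 Hm]] := pn_lbU.
apply: (@LB_inv _ _ _ (m ^+ k)); first by rewrite exprn_gt0.
  move=> x Hx; rewrite normrX; apply: lerXn2r; rewrite ?nnegrE ?normr_ge0 ?(ltW m0) //.
  by rewrite (le_trans (Hm x Hx)) // ler_norm.
by apply: LB_exp; apply: LB_pn.
Qed.

Lemma LB_grad (i : 'I_n) : LB (fun x => grad r p E s x i).
Proof.
apply: (@LB_ext _ _ (fun x : vec R n => (r`!%:R * (pnorm p x ^+ r)^-1) *
  (Axr1 r E s x i + - ((Axr r E s x * (pnorm p x ^+ p)^-1) * xpow p x i)))) => //.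
apply: LB_mul; first by apply: LB_mul; [apply: LB_cst | apply: LB_invpn].
apply: LB_add; first exact: LB_Axr1.
apply: LB_opp; apply: LB_mul; last exact: LB_xpow.
by apply: LB_mul; [apply: LB_Axr | apply: LB_invpn].
Qed.

Lemma LB_fobj : LB (fobj r p E s).
Proof.
apply: (@LB_ext _ _ (fun x : vec R n => ((r.-1)`!%:R * Axr r E s x) * (pnorm p x ^+ r)^-1)) => //.
apply: LB_mul; last exact: LB_invpn.
by apply: LB_mul; [apply: LB_cst | apply: LB_Axr].
Qed.

Lemma grad_lip : exists Lam : R, 0 <= Lam /\ forall x y : vec R n, onU x -> onU y ->
  dotv (fun i => grad r p E s x i - grad r p E s y i) (fun i => grad r p E s x i - grad r p E s y i)
  <= Lam * dotv (fun i => x i - y i) (fun i => x i - y i).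
Proof.
have H : forall i : 'I_n, exists L : R, forall x y : vec R n, onU x -> onU y ->
    `|grad r p E s x i - grad r p E s y i| <= L * dst x y.
  by move=> i; have [M [L [_ K]]] := LB_grad i; exists L.
have [Lf HLf] := fin_all_exists H.
exists (\sum_i Lf i ^+ 2); split; first by apply: sumr_ge0 => i _; exact: sqr_ge0.
move=> x y Hx Hy; rewrite mulr_suml /dotv; apply: ler_sum => i _.
set D := \sum_(i0 < n) (x i0 - y i0) * (x i0 - y i0).
have D0 : 0 <= D by apply: sumr_ge0 => j _; rewrite -expr2 sqr_ge0.
have Hi := HLf i x y Hx Hy.
have Hd : dst x y ^+ 2 = D by rewrite /dst sqr_sqrtr.
rewrite -expr2 -real_normK ?num_real //.
have -> : Lf i ^+ 2 * D = (Lf i * dst x y) ^+ 2 by rewrite exprMn Hd.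
by apply: lerXn2r; rewrite ?nnegrE ?normr_ge0 // (le_trans _ Hi).
Qed.

End Spec.

Section Alg.
Variable R : realType.

Lemma alg_bound (ta ep Y D G dg yg s : R) : 0 < ta -> 0 < ep -> 0 <= Y -> 0 <= D ->
  0 <= G -> dg ^+ 2 <= D * G -> yg ^+ 2 <= Y * G -> ep ^+ 2 * (D * Y) <= s ^+ 2 -> s != 0 ->
  ((ta * Y * dg / s - yg) / s) ^+ 2 * D <= (2 * ta ^+ 2 / ep ^+ 4 + 2 / ep ^+ 2) * G.
Proof.
move=> t0 e0 Y0 D0 G0 Hdg Hyg Hs s0.
have s2 : 0 < s ^+ 2 by rewrite lt_def sqrf_eq0 s0 sqr_ge0.
set t := D * Y / s ^+ 2.
have t0' : 0 <= t by rewrite /t; apply: divr_ge0; [exact: mulr_ge0 | exact: ltW].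
have te : t * ep ^+ 2 <= 1.
  by rewrite /t mulrAC ler_pdivrMr // mul1r mulrC.
set u := ta * Y * dg / s ^+ 2; set v := yg / s.
have -> : (ta * Y * dg / s - yg) / s = u - v by rewrite /u /v; field.
have Hu : u ^+ 2 * D <= ta ^+ 2 * t ^+ 2 * G.
  have -> : u ^+ 2 * D = (ta ^+ 2 * (Y / s ^+ 2) ^+ 2 * D) * dg ^+ 2 by rewrite /u; field.
  have -> : ta ^+ 2 * t ^+ 2 * G = (ta ^+ 2 * (Y / s ^+ 2) ^+ 2 * D) * (D * G) by rewrite /t; field.
  by apply: ler_wpM2l => //; apply: mulr_ge0 => //; apply: mulr_ge0; exact: sqr_ge0.
have Hv : v ^+ 2 * D <= t * G.
  have -> : v ^+ 2 * D = (D / s ^+ 2) * yg ^+ 2 by rewrite /v; field.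
  have -> : t * G = (D / s ^+ 2) * (Y * G) by rewrite /t; field.
  by apply: ler_wpM2l => //; apply: divr_ge0 => //; exact: ltW.
have H2 : (u - v) ^+ 2 * D <= 2 * (u ^+ 2 * D) + 2 * (v ^+ 2 * D).
  rewrite -subr_ge0; have -> : 2 * (u ^+ 2 * D) + 2 * (v ^+ 2 * D) - (u - v) ^+ 2 * D = (u + v) ^+ 2 * D by ring.
  by apply: mulr_ge0 => //; exact: sqr_ge0.
apply: (le_trans H2).
have e2 : 0 < ep ^+ 2 by rewrite exprn_gt0.
have tle : t <= (ep ^+ 2)^-1 by rewrite -[(ep ^+ 2)^-1]mul1r ler_pdivlMr.
have tle2 : t ^+ 2 <= (ep ^+ 4)^-1.
  have -> : (ep ^+ 4)^-1 = ((ep ^+ 2)^-1) ^+ 2 by rewrite exprVn -exprM.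
  by rewrite lerXn2r // nnegrE invr_ge0 ltW.
have A1 : 2 * (u ^+ 2 * D) <= 2 * ta ^+ 2 / ep ^+ 4 * G.
  apply: (le_trans (ler_wpM2l (ler0n _ 2) Hu)).
  have -> : 2%:R * (ta ^+ 2 * t ^+ 2 * G) = (2 * ta ^+ 2 * G) * t ^+ 2 by ring.
  have -> : 2 * ta ^+ 2 / ep ^+ 4 * G = (2 * ta ^+ 2 * G) * (ep ^+ 4)^-1 by ring.
  by apply: ler_wpM2l => //; apply: mulr_ge0 => //; apply: mulr_ge0 => //; exact: sqr_ge0.
have A2 : 2 * (v ^+ 2 * D) <= 2 / ep ^+ 2 * G.
  apply: (le_trans (ler_wpM2l (ler0n _ 2) Hv)).
  have -> : 2%:R * (t * G) = (2 * G) * t by ring.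
  have -> : 2 / ep ^+ 2 * G = (2 * G) * (ep ^+ 2)^-1 by ring.
  by apply: ler_wpM2l => //; apply: mulr_ge0.
by rewrite [_ * G]mulrDl; exact: lerD A1 A2.
Qed.

End Alg.

Section Beta.
Variables (R : realType) (n : nat).

Lemma beta_props (ta ep : R) (d y g : vec R n) : 1 / 4 < ta -> 0 < ep ->
  (1 - (4 * ta)^-1) * dotv g g <= dotv g g + beta ta ep d y g * dotv d g /\
  beta ta ep d y g ^+ 2 * dotv d d <= (2 * ta ^+ 2 / ep ^+ 4 + 2 / ep ^+ 2) * dotv g g.
Proof.
move=> ht he.
have t0 : 0 < ta by rewrite (lt_trans _ ht) // divr_gt0.
set G := dotv g g; set D := dotv d d.
have G0 : 0 <= G := dotv_ge0 g. have D0 : 0 <= D := dotv_ge0 d.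
have Kpos : 0 <= 2 * ta ^+ 2 / ep ^+ 4 + 2 / ep ^+ 2.
  have e4 : 0 <= ep ^+ 4 by rewrite exprn_ge0 // ltW.
  have e2 : 0 <= ep ^+ 2 by rewrite sqr_ge0.
  apply: addr_ge0; apply: divr_ge0 => //.
  by apply: mulr_ge0; [exact: ler0n | exact: sqr_ge0].
have c0le : (1 - (4 * ta)^-1) * G <= G.
  by rewrite mulrBl mul1r gerBl mulr_ge0 // invr_ge0 mulr_ge0 // ltW.
rewrite /beta.
set bt := beta_tilde ta ep d y g.
have [Hb|Hb] := leP bt 0.
  rewrite mul0r addr0 expr2 !mul0r; split => //.
  exact: mulr_ge0.

move: Hb; rewrite /bt /beta_tilde.
case: ifP => Hc; last by rewrite ltxx.
set s := dotv d y.
have [s0|s0] := eqVneq s 0.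
  by rewrite s0 invr0 mulr0 ltxx.
move=> _.
set Y := enorm y ^+ 2.
have EY : Y = dotv y y by rewrite /Y enorm_sq.
set dg := dotv d g; set yg := dotv y g.
have -> : dotv (fun i => ta * d i * Y / s - y i) g / s = ((ta * Y * dg / s - yg) / s).
  rewrite (@dotv_lin _ _ _ d y g (ta * Y / s) (-1)); last by move=> i; ring.
  rewrite -/dg -/yg; ring.
have Y0 : 0 <= Y by rewrite /Y sqr_ge0.
have Hdg : dg ^+ 2 <= D * G by exact: CS.
have Hyg : yg ^+ 2 <= Y * G by rewrite EY; exact: CS.
split.
  rewrite -subr_ge0.
  have -> : G + (ta * Y * dg / s - yg) / s * dg - (1 - (4 * ta)^-1) * G =
    (ta * Y) * (dg / s) ^+ 2 - 2 * (yg / 2) * (dg / s) + G / (4 * ta).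
    by field; rewrite s0 /= gt_eqF.
  apply: quad_nonneg.
  - by rewrite mulr_ge0 // ltW.
  - by rewrite divr_ge0 // mulr_ge0 // ltW.
  have -> : ta * Y * (G / (4 * ta)) = (Y * G) / 4 by field; rewrite gt_eqF.
  have -> : (yg / 2) ^+ 2 = yg ^+ 2 / 4 by field.
  by rewrite ler_pM2r.
apply: alg_bound => //.
have H1 : 0 <= ep * enorm d * enorm y by rewrite !mulr_ge0 ?sqrtr_ge0 // ltW.
have := lerXn2r 2 (x := ep * enorm d * enorm y) (y := `|s|).
rewrite !nnegrE H1 normr_ge0 => /(_ isT isT Hc).
by rewrite real_normK ?num_real // !exprMn !enorm_sq -EY mulrA.
Qed.

End Beta.

Unset Implicit Arguments. Set Strict Implicit.

Theorem theorem4p1 (R : realType) (n r p : nat)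
  (E : {set {set 'I_n}}) (s : {set 'I_n} -> R)
  (c1 c2 tau eps : R)
  (x pd : nat -> vec R n) (alpha : nat -> R) :
  (2 <= r)%N -> (2 <= p)%N ->
  (forall e, e \in E -> #|e| = r) ->
  (forall e, e \in E -> 0 < s e) ->
  0 < c1 -> c1 < c2 -> c2 < 1 ->
  1 / 4 < tau -> tau < 1 -> 0 < eps ->
  dotv (x 0%N) (x 0%N) = 1 ->
  pd 0%N = grad r p E s (x 0%N) ->
  (forall k, 0 < alpha k) ->
  (forall k, fobj r p E s (xnext (x k) (pd k) (alpha k))
             >= fobj r p E s (x k)
                + c1 * alpha k * dotv (grad r p E s (x k)) (pd k)) ->
  (forall k, dotv (grad r p E s (xnext (x k) (pd k) (alpha k))) (pd k)
             <= c2 * dotv (grad r p E s (x k)) (pd k)) ->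
  (forall k, x k.+1 = xnext (x k) (pd k) (alpha k)) ->
  (forall k, pd k.+1 = (fun i =>
      grad r p E s (x k.+1) i
      + beta tau eps (fun j => x k.+1 j - x k j)
                     (fun j => grad r p E s (x k.+1) j - grad r p E s (x k) j)
                     (grad r p E s (x k.+1))
        * (x k.+1 i - x k i))) ->
  (forall k, grad r p E s (x k) <> (fun _ => 0)) ->
  ((fun k => enorm (grad r p E s (x k))) @ \oo --> (0 : R))%classic.
Proof.
move=> hr hp hE hs c10 c12 c21 ht1 ht2 he Hx0 Hp0 Ha W1 W2 Hxs Hps Hg.
have HU : forall k, onU (x k).
  by elim => [|k IH] //; rewrite /onU Hxs; exact: xnext_unit.
set g := fun k => grad r p E s (x k).
set G := fun k => dotv (g k) (g k).
set Gp := fun k => dotv (g k) (pd k).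
set P := fun k => dotv (pd k) (pd k).
have t0 : 0 < tau by rewrite (lt_trans _ ht1) // divr_gt0.
set c0 := 1 - (4 * tau)^-1.
have c0p : 0 < c0.
  rewrite /c0 subr_gt0 invf_lt1 ?mulr_gt0 //.
  by move: ht1; rewrite ltr_pdivrMr // mulrC.
have c01 : c0 <= 1 by rewrite /c0 gerBl invr_ge0 mulr_ge0 // ltW.
set K := 2 * tau ^+ 2 / eps ^+ 4 + 2 / eps ^+ 2.
have K0 : 0 <= K.
  have e4 : 0 <= eps ^+ 4 by rewrite exprn_ge0 // ltW.
  have e2 : 0 <= eps ^+ 2 by rewrite sqr_ge0.
  apply: addr_ge0; apply: divr_ge0 => //.
  by apply: mulr_ge0; [exact: ler0n | exact: sqr_ge0].
set C := 2 + 2 * K.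
have C1 : 1 <= C by rewrite /C; lra.
have G0 : forall k, 0 <= G k by move=> k; exact: dotv_ge0.
have Gpos : forall k, 0 < G k.
  move=> k; rewrite lt_def G0 andbT; apply/negP => /eqP H.
  by apply: (Hg k); apply: boolp.funext => i; exact: (dotv_eq0 H).
have Hasc : forall k, c0 * G k <= Gp k /\ P k <= C * G k.
  case => [|k].
    have H0 := G0 0%N; rewrite /G /g in H0.
    rewrite /Gp /P /G /g Hp0; split; nra.
  set d := fun j => x k.+1 j - x k j.
  set y := fun j => grad r p E s (x k.+1) j - grad r p E s (x k) j.
  have [B1 B2] := beta_props d y (g k.+1) ht1 he.
  set b := beta tau eps d y (g k.+1) in B1 B2.
  have Hpk : forall i, pd k.+1 i = 1 * g k.+1 i + b * d i by move=> i; rewrite Hps mul1r.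
  have EGp : Gp k.+1 = G k.+1 + b * dotv d (g k.+1).
    rewrite /Gp dotvC (dotv_lin (g k.+1) Hpk) mul1r.
    by [].
  have EP : P k.+1 = G k.+1 + 2 * b * dotv (g k.+1) d + b ^+ 2 * dotv d d.
    by rewrite /P (dot2 Hpk Hpk) /G; ring.
  split; first by rewrite EGp.
  rewrite EP [dotv (g k.+1) d]dotvC.
  have Hq := quad_nonneg b (dotv_ge0 d) (G0 k.+1) (CS d (g k.+1)).
  have -> : C * G k.+1 = 2 * G k.+1 + 2 * (K * G k.+1) by rewrite /C; ring.
  have : 2 * b * dotv d (g k.+1) <= G k.+1 + b ^+ 2 * dotv d d.
    by rewrite -subr_ge0; move: Hq; rewrite /G; lra.
  move=> H; move: B2 H; rewrite -/K /G; lra.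
have [Lam [Lam0 HL]] := grad_lip r E s hp.
set rho := Num.sqrt Lam + 1.
have rho0 : 0 < rho by rewrite /rho ltr_wpDl ?sqrtr_ge0.
have rhoL : Lam <= rho ^+ 2.
  have sq0 := sqrtr_ge0 Lam; have sq2 := sqr_sqrtr Lam0; rewrite /rho; nra.
set u := fun k => fobj r p E s (x k).
have c2p : 0 < 1 - c2 by rewrite subr_gt0.
have Hkey : forall k, c1 * (1 - c2) * c0 ^+ 2 * G k <= rho * C * (u k.+1 - u k) /\ u k <= u k.+1.
  move=> k.
  have [A1 A2] := Hasc k.
  have Gk := Gpos k.
  have Gpk : 0 < Gp k by rewrite (lt_le_trans _ A1) // mulr_gt0.
  have P0 : 0 <= P k by exact: dotv_ge0.
  have al0 := Ha k.
  have W1k := W1 k; rewrite -Hxs in W1k.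
  have W2k := W2 k; rewrite -Hxs in W2k.
  have F4 : c1 * alpha k * Gp k <= u k.+1 - u k.
    by move: W1k; rewrite /u /Gp /g; lra.
  split; last first.
    by rewrite -subr_ge0 (le_trans _ F4) // !mulr_ge0 // ltW.
  set w := dotv (fun i => g k.+1 i - g k i) (pd k).
  have Ew : w = dotv (g k.+1) (pd k) - Gp k.
    rewrite /w (@dotv_lin _ _ _ (g k.+1) (g k) (pd k) 1 (-1)); last by move=> i; ring.
    by rewrite /Gp; ring.
  have H1 : (1 - c2) * Gp k <= - w by move: W2k; rewrite Ew /Gp /g; lra.
  have Hst := xnext_step (pd k) (alpha k) (HU k); rewrite -Hxs in Hst.
  have HLk := HL _ _ (HU k.+1) (HU k).
  have Hw2 : w ^+ 2 <= (rho * alpha k * P k) ^+ 2.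
    apply: (le_trans (CS _ _)).
    apply: (le_trans (ler_wpM2r P0 HLk)).
    rewrite -/(P k) exprMn exprMn.
    have -> : rho ^+ 2 * alpha k ^+ 2 * P k ^+ 2 = (rho ^+ 2 * (alpha k ^+ 2 * P k)) * P k by ring.
    apply: ler_wpM2r => //.
    apply: (le_trans (ler_wpM2l Lam0 Hst)).
    by apply: ler_wpM2r => //; rewrite mulr_ge0 // sqr_ge0.
  have F2 : (1 - c2) * Gp k <= rho * alpha k * P k.
    have h0 : 0 <= (1 - c2) * Gp k by rewrite mulr_ge0 // ltW.
    have h1 : 0 <= rho * alpha k * P k by rewrite !mulr_ge0 // ltW.
    rewrite -(@ler_pXn2r _ 2) // ?nnegrE //.
    apply: (le_trans _ Hw2).
    rewrite -[w ^+ 2]sqrrN; apply: lerXn2r; rewrite ?nnegrE //.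
    exact: (le_trans h0 H1).
  have F1 : (c0 * G k) ^+ 2 <= Gp k ^+ 2.
    by apply: lerXn2r => //; rewrite nnegrE; [exact: (mulr_ge0 (ltW c0p) (ltW Gk)) | exact: ltW Gpk].
  have S1 : c1 * (1 - c2) * c0 ^+ 2 * G k ^+ 2 <= c1 * (1 - c2) * Gp k ^+ 2.
    rewrite -mulrA -exprMn; apply: ler_wpM2l => //.
    by rewrite mulr_ge0 // ltW.
  have S2 : c1 * (1 - c2) * Gp k ^+ 2 <= (c1 * Gp k) * (rho * alpha k * P k).
    have -> : c1 * (1 - c2) * Gp k ^+ 2 = (c1 * Gp k) * ((1 - c2) * Gp k) by ring.
    by apply: ler_wpM2l => //; rewrite mulr_ge0 // ltW.
  have S3 : (c1 * Gp k) * (rho * alpha k * P k) <= (c1 * Gp k * rho * alpha k) * (C * G k).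
    have -> : (c1 * Gp k) * (rho * alpha k * P k) = (c1 * Gp k * rho * alpha k) * P k by ring.
    by apply: ler_wpM2l => //; rewrite !mulr_ge0 // ltW.
  have S4 : (c1 * Gp k * rho * alpha k) * (C * G k) <= (rho * C * G k) * (u k.+1 - u k).
    have -> : (c1 * Gp k * rho * alpha k) * (C * G k) = (rho * C * G k) * (c1 * alpha k * Gp k) by ring.
    apply: ler_wpM2l => //; rewrite !mulr_ge0 // ltW //.
    by rewrite (lt_le_trans _ C1).
  have := le_trans S1 (le_trans S2 (le_trans S3 S4)).
  have -> : c1 * (1 - c2) * c0 ^+ 2 * G k ^+ 2 = G k * (c1 * (1 - c2) * c0 ^+ 2 * G k) by ring.
  have -> : rho * C * G k * (u k.+1 - u k) = G k * (rho * C * (u k.+1 - u k)) by ring.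
  by rewrite ler_pM2l.
have Hmono : forall k, u k <= u k.+1 by move=> k; have [] := Hkey k.
have [MB [LBf [HB _]]] := LB_fobj r E s hp.
have Hub : has_ubound (range u).
  by exists MB => _ [k _ <-]; apply: (le_trans (ler_norm _)); apply: HB; exact: HU.
have Hcv := nondecreasing_is_cvgn (iffLR (nondecreasing_seqP u) Hmono) Hub.
have HD : ((fun k => u k.+1 - u k) @ \oo --> (0 : R))%classic.
  have H2 : ((fun k => u k.+1) @ \oo --> limn u)%classic by rewrite (cvg_shiftS u).
  by rewrite -(subrr (limn u)); exact: cvgB H2 Hcv.
set kap := c1 * (1 - c2) * c0 ^+ 2.
have kap0 : 0 < kap by rewrite /kap !mulr_gt0 // exprn_gt0.
have C0 : 0 < C by rewrite (lt_le_trans _ C1).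
set Kf := rho * C / kap.
have Kf0 : 0 < Kf by rewrite /Kf divr_gt0 // mulr_gt0.
have HG : forall k, G k <= Kf * (u k.+1 - u k).
  move=> k; have [H _] := Hkey k.
  by rewrite /Kf mulrAC ler_pdivlMr // mulrC.
apply/cvgrPdist_le => e e0.
have e20 : 0 < e ^+ 2 / Kf by rewrite divr_gt0 // exprn_gt0.
move/cvgrPdist_le : HD => /(_ _ e20).
apply: filterS => k Hk.
rewrite sub0r normrN ger0_norm ?sqrtr_ge0 //.
have Hk' : u k.+1 - u k <= e ^+ 2 / Kf.
  by apply: (le_trans _ Hk); rewrite sub0r normrN ler_norm.
have HGk : G k <= e ^+ 2.
  apply: (le_trans (HG k)).
  by rewrite mulrC -ler_pdivlMr.
rewrite /enorm -[e](ger0_norm (ltW e0)) -sqrtr_sqr.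
by apply: ler_wsqrtr; exact: HGk.
Qed.
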